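(* Let $0<p\leqslant q:=1-p$, and let $\tilde f(z)$ and $\tilde g(z)$ be entire functions satisfying \[ \tilde{f}(z)=(1-e^{-pz})\tilde{f}(pz) +e^{-pz}\tilde{f}(qz) +\tilde{g}(z), \] with $\tilde f(0)=\tilde g(0)=0$. Then $\tilde f$ is JS-admissible if and only if $\tilde g$ is JS-admissible.
   Context: An entire function $\tilde f$ is called JS-admissible if the following two conditions hold for $|z|\geqslant1$ (for some small $\varepsilon>0$ and some $\varepsilon'\in(0,1)$): (I) there exist $\alpha,\beta\in\mathbb{R}$ such that, uniformly for $|\arg(z)|\leqslant\varepsilon$, $\tilde f(z)=O\left(|z|^\alpha(\log_+|z|)^\beta\right)$, where $\log_+x:=\log(1+x)$; (O) uniformly for $\varepsilon\leqslant|\arg(z)|\leqslant\pi$, $e^z\tilde f(z)=O\left(e^{(1-\varepsilon')|z|}\right)$. *)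

(* Defs.v *)
From Stdlib Require Import Reals.
From Coquelicot Require Import Coquelicot.
Open Scope R_scope.

Definition Cexp (w : C) : C :=
  (exp (fst w) * cos (snd w), exp (fst w) * sin (snd w)).

Definition entire (f : C -> C) : Prop :=
  forall z : C, @ex_derive C_AbsRing C_NormedModule f z.

(* |arg z| for z <> 0, with the principal argument arg z in (-pi, pi]:
   |arg z| = acos (Re z / |z|) in [0, pi]. *)
Definition abs_arg (z : C) : R := acos (fst z / Cmod z).

Definition log_plus (x : R) : R := ln (1 + x).

Definition JS_admissible (f : C -> C) : Prop :=
  exists (eps eps' : R), 0 < eps /\ 0 < eps' < 1 /\
    (* (I) *)
    (exists (alpha beta K : R),
       forall z : C, 1 <= Cmod z -> abs_arg z <= eps ->
         Cmod (f z) <= K * (Rpower (Cmod z) alpha * Rpower (log_plus (Cmod z)) beta)) /\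
    (* (O) *)
    (exists K : R,
       forall z : C, 1 <= Cmod z -> eps <= abs_arg z <= PI ->
         Cmod (Cexp z * f z) <= K * exp ((1 - eps') * Cmod z)).

(* Main.v *)
Require Import Defs.
From Stdlib Require Import Reals Lra Lia Classical ClassicalEpsilon List.
From Coquelicot Require Import Coquelicot.
Open Scope R_scope.

Lemma exp_mono x y : x <= y -> exp x <= exp y.
Proof. intros H; destruct (Req_dec x y) as [->|]; [lra|]. left; apply exp_increasing; lra. Qed.

Lemma exp_pow_n (y : R) (n : nat) : exp (INR n * y) = exp y ^ n.
Proof.
  induction n as [|n IH]. simpl. rewrite Rmult_0_l, exp_0; reflexivity.
  rewrite S_INR, Rmult_plus_distr_r, Rmult_1_l, exp_plus, IH. simpl. ring.
Qed.

Lemma pow_le_exp (a : R) (N : nat) : 0 < a ->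
  exists C, 0 <= C /\ forall r, 0 <= r -> r ^ N <= C * exp (a * r).
Proof.
  intros Ha. destruct N as [|N].
  - exists 1. split; [lra|]. intros r Hr. simpl. rewrite Rmult_1_l.
    pose proof (exp_ineq1_le (a*r)). assert (0 <= a*r) by nra. lra.
  - assert (Hn : 0 < INR (S N)) by (apply lt_0_INR; lia). remember (INR (S N)) as n eqn:En.
    exists ((n / a) ^ (S N)). split. apply pow_le. apply Rlt_le, Rdiv_lt_0_compat; lra.
    intros r Hr.
    replace (a * r) with (INR (S N) * (a * r / n)) by (rewrite <- En; field; lra).
    rewrite exp_pow_n, <- Rpow_mult_distr.
    apply pow_incr. split; [lra|].
    pose proof (exp_ineq1_le (a * r / n)).
    assert (0 <= a * r / n) by (apply Rmult_le_pos; [apply Rmult_le_pos; lra | apply Rlt_le, Rinv_0_lt_compat; lra]).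
    apply Rle_trans with (n / a * (a * r / n)).
    right; field; lra.
    apply Rmult_le_compat_l. apply Rlt_le, Rdiv_lt_0_compat; lra. lra.
Qed.

Lemma exp_small (a b : R) : 0 < a -> 0 < b -> exists R0, forall r, R0 <= r -> exp (- (a * r)) <= b.
Proof.
  intros Ha Hb. exists (- ln b / a). intros r Hr.
  rewrite <- (exp_ln b Hb). apply exp_mono.
  assert (a * r >= a * (- ln b / a)) by nra.
  replace (a * (- ln b / a)) with (- ln b) in H by (field; lra). lra.
Qed.

Lemma pow_small (q b : R) : 0 <= q < 1 -> 0 < b -> exists M : nat, forall n, (M <= n)%nat -> q ^ n <= b.
Proof.
  intros Hq Hb. destruct (pow_lt_1_zero q ltac:(rewrite Rabs_pos_eq; lra) b Hb) as [M HM].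
  exists M. intros n Hn. specialize (HM n Hn). rewrite Rabs_pos_eq in HM. lra. apply pow_le; lra.
Qed.

Lemma pow_le1 (x : R) (n : nat) : 0 <= x <= 1 -> x ^ n <= 1.
Proof.
  intros H. induction n as [|n IH]; simpl. lra.
  assert (0 <= x ^ n) by (apply pow_le; lra). nra.
Qed.

Lemma exp_neg_le1 x : 0 <= x -> exp (- x) <= 1.
Proof. intros. rewrite <- exp_0. apply exp_mono. lra. Qed.

Lemma mul_bound (c c' F B : R) : 0 <= c <= c' -> F <= B -> 0 <= B -> c * F <= c' * B.
Proof. intros H1 H2 H3. destruct (Rle_or_lt 0 F); nra. Qed.

Lemma exp_le1 z : z <= 0 -> exp z <= 1.
Proof. intros. rewrite <- exp_0. apply exp_mono. lra. Qed.
Lemma exp_ge1 z : 0 <= z -> 1 <= exp z.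
Proof. intros. rewrite <- exp_0. apply exp_mono. lra. Qed.

Lemma abs_le_inv x r : Rabs x <= r -> - r <= x <= r.
Proof. intros. split; [pose proof (Rle_abs (-x)); rewrite Rabs_Ropp in *; lra | pose proof (Rle_abs x); lra]. Qed.


Lemma core_step (p e K A r x Fz Fp Fq G Y0 : R) (M N : nat) :
  0 < p -> p <= 1 - p -> 0 < e < 1 -> 0 <= K -> 4 * K <= A -> 1 <= r -> Rabs x <= r ->
  (N <= M)%nat -> (1 <= M)%nat ->
  2 * p ^ M + (1 - p) ^ M <= 1/2 ->
  exp (- (p * (1 - e) * r)) <= 1/8 ->
  r ^ M * exp (- ((1 - e) * r)) <= 1/24 ->
  0 <= Y0 -> exp (- (p * Y0)) <= 1/6 -> 12 * exp Y0 <= r ->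
  Fp <= A * ((p * r) ^ M + exp ((1 - e) * (p * r) - p * x)) ->
  Fq <= A * (((1 - p) * r) ^ M + exp ((1 - e) * ((1 - p) * r) - (1 - p) * x)) ->
  G <= K * (r ^ N + exp ((1 - e) * r - x)) ->
  Fz <= (1 + exp (- (p * x))) * Fp + exp (- (p * x)) * Fq + G ->
  Fz <= A * (r ^ M + exp ((1 - e) * r - x)).
Proof.
  intros Hp Hpq He HK HA Hr Hx HNM HM Hpow H1 H2 HY0 HY1 HY2 HFp HFq HG HF.
  assert (Hx' : - r <= x <= r) by (split; [pose proof (Rle_abs (-x)); rewrite Rabs_Ropp in *; lra | pose proof (Rle_abs x); lra]). clear Hx. rename Hx' into Hx.
  set (q := 1 - p) in *.
  set (y := (1 - e) * r - x) in *.
  rewrite Rpow_mult_distr in HFp, HFq.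
  replace ((1 - e) * (p * r) - p * x) with (p * y) in HFp by (unfold y; ring).
  replace ((1 - e) * (q * r) - q * x) with (q * y) in HFq by (unfold y, q; ring).
  assert (Hu0 : 0 < exp (- (p * x))) by apply exp_pos.
  assert (HE0 : 0 < exp y) by apply exp_pos.
  assert (Hepy : 0 < exp (p * y)) by apply exp_pos.
  assert (Heqy : 0 < exp (q * y)) by apply exp_pos.
  assert (Iq : exp (- (p * x)) * exp (q * y) = exp y * exp (- (p * (1 - e) * r))).
  { rewrite <- !exp_plus. f_equal. unfold y, q; ring. }
  assert (Ip : exp (- (p * x)) * exp (p * y) = exp y * exp (- (p * (1 - e) * r)) * exp ((1 - 2 * p) * (x - (1 - e) * r))).
  { rewrite <- !exp_plus. f_equal. unfold y, q; ring. }
  assert (IP : exp (- (p * x)) = exp y * exp (- ((1 - e) * r)) * exp (q * x)).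
  { rewrite <- !exp_plus. f_equal. unfold y, q; ring. }
  set (E := exp y) in *. set (u := exp (- (p * x))) in *. set (P := r ^ M) in *.
  assert (HA0 : 0 <= A) by lra.
  assert (HrN : r ^ N <= P) by (apply Rle_pow; auto).
  assert (HrM : r <= P) by (unfold P; rewrite <- pow_1 at 1; apply Rle_pow; auto).
  assert (Hpm0 : 0 <= p ^ M) by (apply pow_le; lra).
  assert (Hqm0 : 0 <= q ^ M) by (apply pow_le; unfold q in *; lra).
  assert (HG' : G <= K * P + K * E). { apply Rle_trans with (1 := HG). assert (K * r ^ N <= K * P) by (apply Rmult_le_compat_l; auto). lra. }
  assert (Hpm1 : p ^ M <= 1) by (apply pow_le1; unfold q in *; lra).
  assert (Hqm1 : q ^ M <= 1) by (apply pow_le1; unfold q in *; lra).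
  assert (HP0 : 0 <= P) by lra.
  destruct (Rle_or_lt 0 x) as [Hx0 | Hx0].
  -
    assert (Hu1 : u <= 1) by (unfold u; apply exp_neg_le1; nra).
    assert (Hc1 : (1 + u) * Fp <= 2 * A * (p ^ M * P + exp (p * y))).
    { rewrite Rmult_assoc. apply mul_bound; [lra | exact HFp | ].
      apply Rmult_le_pos; [lra|]. nra. }
    assert (Hc2 : u * Fq <= A * (q ^ M * P + exp (q * y))).
    { rewrite <- (Rmult_1_l (A * _)). apply mul_bound; [lra | exact HFq | ].
      apply Rmult_le_pos; [lra|]. nra. }
    destruct (Rle_or_lt Y0 y) as [Hy | Hy].
    + assert (Hpqe : exp (p * y) <= exp (q * y)) by (apply exp_mono; unfold q in *; nra).
      assert (Hqe : exp (q * y) <= E / 6).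
      { replace (q * y) with (y + - (p * y)) by (unfold q in *; ring). rewrite exp_plus.
        fold E. assert (exp (- (p * y)) <= exp (- (p * Y0))) by (apply exp_mono; nra). nra. }
      assert (A * (2 * p ^ M + q ^ M) * P <= A * (1/2) * P).
      { apply Rmult_le_compat_r; auto. apply Rmult_le_compat_l; auto. }
      nra.
    + assert (Hb1 : exp (p * y) <= exp Y0) by (apply exp_mono; unfold q in *; destruct (Rle_or_lt 0 y); nra).
      assert (Hb2 : exp (q * y) <= exp Y0) by (apply exp_mono; unfold q in *; destruct (Rle_or_lt 0 y); nra).
      assert (A * (2 * p ^ M + q ^ M) * P <= A * (1/2) * P).
      { apply Rmult_le_compat_r; auto. apply Rmult_le_compat_l; auto. }
      nra.
  -
    assert (Hu1 : 1 <= u) by (unfold u; apply exp_ge1; nra).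
    assert (Hc1 : (1 + u) * Fp <= 2 * A * (u * P + u * exp (p * y))).
    { assert (HB : Fp <= A * (P + exp (p * y))).
      { apply Rle_trans with (1 := HFp). apply Rmult_le_compat_l; [lra|]. nra. }
      replace (2 * A * (u * P + u * exp (p * y))) with ((2 * u) * (A * (P + exp (p * y)))) by ring.
      apply mul_bound; [lra | exact HB | nra]. }
    assert (Hc2 : u * Fq <= A * (u * P + u * exp (q * y))).
    { assert (HB : Fq <= A * (P + exp (q * y))).
      { apply Rle_trans with (1 := HFq). apply Rmult_le_compat_l; [lra|]. nra. }
      replace (A * (u * P + u * exp (q * y))) with (u * (A * (P + exp (q * y)))) by ring.
      apply mul_bound; [lra | exact HB | nra]. }
    assert (Hs1 : u * exp (q * y) <= E / 8) by (rewrite Iq; nra).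
    assert (Hs2 : u * exp (p * y) <= E / 8).
    { rewrite Ip. assert (exp ((1 - 2 * p) * (x - (1 - e) * r)) <= 1).
      { apply exp_le1. unfold q in *. assert (0 <= (1-e)*r) by nra. assert (0 <= 1 - 2*p) by lra. assert (0 <= (1 - e) * r - x) by lra. nra. }
      assert (0 < exp (- (p * (1 - e) * r))) by apply exp_pos.
      assert (0 < exp ((1 - 2 * p) * (x - (1 - e) * r))) by apply exp_pos.
      nra. }
    assert (Hs3 : u * P <= E / 24).
    { rewrite IP. assert (exp (q * x) <= 1) by (apply exp_le1; unfold q in *; nra).
      assert (0 < exp (q * x)) by apply exp_pos.
      assert (0 < exp (- ((1 - e) * r))) by apply exp_pos.
      replace (E * exp (- ((1 - e) * r)) * exp (q * x) * P) with (E * ((P * exp (- ((1 - e) * r))) * exp (q * x))) by ring.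
      assert (P * exp (- ((1 - e) * r)) * exp (q * x) <= 1/24 * 1).
      { apply Rmult_le_compat; auto; try lra. apply Rmult_le_pos; lra. }
      nra. }
    nra.
Qed.


Lemma core_back (p e A r x Fz Fp Fq G C : R) (N : nat) :
  0 < p -> p <= 1 - p -> 0 < e < 1 -> 0 <= A -> 1 <= r -> Rabs x <= r -> 0 <= C ->
  r ^ N * exp (- ((1 - e) * r)) <= C ->
  0 <= Fp -> 0 <= Fq ->
  Fz <= A * (r ^ N + exp ((1 - e) * r - x)) ->
  Fp <= A * ((p * r) ^ N + exp ((1 - e) * (p * r) - p * x)) ->
  Fq <= A * (((1 - p) * r) ^ N + exp ((1 - e) * ((1 - p) * r) - (1 - p) * x)) ->
  G <= Fz + (1 + exp (- (p * x))) * Fp + exp (- (p * x)) * Fq ->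
  G <= A * (7 + 3 * C) * (r ^ N + exp ((1 - e) * r - x)).
Proof.
  intros Hp Hpq He HA Hr Hx HC0 HC Hfp0 Hfq0 HFz HFp HFq HG.
  assert (Hx' : - r <= x <= r) by (split; [pose proof (Rle_abs (-x)); rewrite Rabs_Ropp in *; lra | pose proof (Rle_abs x); lra]). clear Hx. rename Hx' into Hx.
  assert (Hp1 : p <= 1) by lra.
  assert (Hper : 0 <= p * (1 - e) * r) by (apply Rmult_le_pos; [apply Rmult_le_pos|]; lra).
  set (q := 1 - p) in *.
  set (y := (1 - e) * r - x) in *.
  rewrite Rpow_mult_distr in HFp, HFq.
  replace ((1 - e) * (p * r) - p * x) with (p * y) in HFp by (unfold y; ring).
  replace ((1 - e) * (q * r) - q * x) with (q * y) in HFq by (unfold y, q; ring).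
  assert (Hu0 : 0 < exp (- (p * x))) by apply exp_pos.
  assert (HE0 : 0 < exp y) by apply exp_pos.
  assert (Hepy : 0 < exp (p * y)) by apply exp_pos.
  assert (Heqy : 0 < exp (q * y)) by apply exp_pos.
  assert (Iq : exp (- (p * x)) * exp (q * y) = exp y * exp (- (p * (1 - e) * r))).
  { rewrite <- !exp_plus. f_equal. unfold y, q; ring. }
  assert (Ip : exp (- (p * x)) * exp (p * y) = exp y * exp (- (p * (1 - e) * r)) * exp ((1 - 2 * p) * (x - (1 - e) * r))).
  { rewrite <- !exp_plus. f_equal. unfold y, q; ring. }
  assert (IP : exp (- (p * x)) = exp y * exp (- ((1 - e) * r)) * exp (q * x)).
  { rewrite <- !exp_plus. f_equal. unfold y, q; ring. }
  set (E := exp y) in *. set (u := exp (- (p * x))) in *. set (P := r ^ N) in *.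
  assert (HP1 : 1 <= P) by (apply pow_R1_Rle; lra).
  assert (Hpm0 : 0 <= p ^ N) by (apply pow_le; lra).
  assert (Hqm0 : 0 <= q ^ N) by (apply pow_le; unfold q in *; lra).
  assert (Hpm1 : p ^ N <= 1) by (apply pow_le1; unfold q in *; lra).
  assert (Hqm1 : q ^ N <= 1) by (apply pow_le1; unfold q in *; lra).
  assert (HFp' : Fp <= A * (P + exp (p * y))).
  { apply Rle_trans with (1 := HFp). apply Rmult_le_compat_l; [lra|]. nra. }
  assert (HFq' : Fq <= A * (P + exp (q * y))).
  { apply Rle_trans with (1 := HFq). apply Rmult_le_compat_l; [lra|]. nra. }
  assert (Hfin : A * (4 * P + 4 * E + 3 * C * E) <= A * (7 + 3 * C) * (P + E)).
  { replace (A * (7 + 3 * C) * (P + E)) with (A * ((7 + 3 * C) * (P + E))) by ring. apply Rmult_le_compat_l; [lra|]. nra. }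
  destruct (Rle_or_lt 0 x) as [Hx0 | Hx0].
  - assert (Hu1 : u <= 1) by (unfold u; apply exp_neg_le1; nra).
    assert (Hb1 : exp (p * y) <= 1 + E).
    { destruct (Rle_or_lt y 0). pose proof (exp_le1 (p * y) ltac:(nra)); lra.
      assert (exp (p * y) <= E) by (apply exp_mono; nra). lra. }
    assert (Hb2 : exp (q * y) <= 1 + E).
    { destruct (Rle_or_lt y 0). pose proof (exp_le1 (q * y) ltac:(unfold q in *; nra)); lra.
      assert (exp (q * y) <= E) by (apply exp_mono; unfold q in *; nra). lra. }
    assert ((1 + u) * Fp <= 2 * (A * (P + 1 + E))) by (apply mul_bound; try lra; nra).
    assert (u * Fq <= 1 * (A * (P + 1 + E))) by (apply mul_bound; try lra; nra).
    assert (A * (4 * P + 4 * E + 3) <= A * (4 * P + 4 * E + 3 * C * E + 3 * P)) by (apply Rmult_le_compat_l; nra).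
    nra.
  - assert (Hu1 : 1 <= u) by (unfold u; apply exp_ge1; nra).
    assert (Hs1 : u * exp (q * y) <= E).
    { rewrite Iq. assert (exp (- (p * (1 - e) * r)) <= 1) by (apply exp_le1; lra). nra. }
    assert (Hs2 : u * exp (p * y) <= E).
    { rewrite Ip. assert (exp ((1 - 2 * p) * (x - (1 - e) * r)) <= 1).
      { apply exp_le1. unfold q in *. assert (0 <= (1-e)*r) by nra. assert (0 <= 1 - 2*p) by lra. assert (0 <= (1 - e) * r - x) by lra. nra. }
      assert (exp (- (p * (1 - e) * r)) <= 1) by (apply exp_le1; lra).
      assert (0 < exp (- (p * (1 - e) * r))) by apply exp_pos.
      assert (0 < exp ((1 - 2 * p) * (x - (1 - e) * r))) by apply exp_pos.
      assert (exp (- (p * (1 - e) * r)) * exp ((1 - 2 * p) * (x - (1 - e) * r)) <= 1 * 1)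
        by (apply Rmult_le_compat; lra).
      nra. }
    assert (Hs3 : u * P <= E * C).
    { rewrite IP. assert (exp (q * x) <= 1) by (apply exp_le1; unfold q in *; nra).
      assert (0 < exp (q * x)) by apply exp_pos.
      assert (0 < exp (- ((1 - e) * r))) by apply exp_pos.
      replace (E * exp (- ((1 - e) * r)) * exp (q * x) * P) with (E * ((P * exp (- ((1 - e) * r))) * exp (q * x))) by ring.
      assert (P * exp (- ((1 - e) * r)) * exp (q * x) <= C * 1).
      { apply Rmult_le_compat; auto; try lra. apply Rmult_le_pos; lra. }
      nra. }
    assert ((1 + u) * Fp <= (2 * u) * (A * (P + exp (p * y)))) by (apply mul_bound; try lra; nra).
    assert (u * Fq <= u * (A * (P + exp (q * y)))) by (apply mul_bound; try lra; nra).
    assert (A * (u * P) <= A * (E * C)) by (apply Rmult_le_compat_l; lra).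
    assert (A * (u * exp (p * y)) <= A * E) by (apply Rmult_le_compat_l; lra).
    assert (A * (u * exp (q * y)) <= A * E) by (apply Rmult_le_compat_l; lra).
    nra.
Qed.


Lemma Cmod_Cexp w : Cmod (Cexp w) = exp (fst w).
Proof.
  unfold Cexp, Cmod. cbn [fst snd].
  replace ((exp (fst w) * cos (snd w)) ^ 2 + (exp (fst w) * sin (snd w)) ^ 2)
    with ((exp (fst w)) * (exp (fst w))) by (pose proof (sin2_cos2 (snd w)); unfold Rsqr in *; nra).
  apply sqrt_square. left; apply exp_pos.
Qed.

Lemma fst_scal a z : fst (RtoC a * z)%C = a * fst z.
Proof. destruct z; simpl; ring. Qed.

Lemma Cmod_scal a z : 0 <= a -> Cmod (RtoC a * z)%C = a * Cmod z.
Proof. intros. rewrite Cmod_mult, Cmod_R, Rabs_pos_eq; auto. Qed.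

Lemma fst_opp w : fst (- w)%C = - fst w.
Proof. destruct w; simpl; ring. Qed.

Lemma Cmod_exp_neg p z : Cmod (Cexp (- (RtoC p * z))) = exp (- (p * fst z)).
Proof. rewrite Cmod_Cexp, fst_opp, fst_scal. reflexivity. Qed.

Lemma rec_ineq p (f g : C -> C) z :
  f z = ((1 - Cexp (- (RtoC p * z))) * f (RtoC p * z)
            + Cexp (- (RtoC p * z)) * f (RtoC (1 - p) * z) + g z)%C ->
  Cmod (f z) <= (1 + exp (- (p * fst z))) * Cmod (f (RtoC p * z)%C)
                + exp (- (p * fst z)) * Cmod (f (RtoC (1 - p) * z)%C) + Cmod (g z).
Proof.
  intros H. rewrite H.
  eapply Rle_trans. apply Cmod_triangle. apply Rplus_le_compat_r.
  eapply Rle_trans. apply Cmod_triangle.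
  rewrite !Cmod_mult, Cmod_exp_neg. apply Rplus_le_compat_r.
  apply Rmult_le_compat_r. apply Cmod_ge_0.
  eapply Rle_trans. apply Cmod_triangle. rewrite Cmod_opp, Cmod_1, Cmod_exp_neg. lra.
Qed.

Lemma rec_ineq_back p (f g : C -> C) z :
  f z = ((1 - Cexp (- (RtoC p * z))) * f (RtoC p * z)
            + Cexp (- (RtoC p * z)) * f (RtoC (1 - p) * z) + g z)%C ->
  Cmod (g z) <= Cmod (f z) + (1 + exp (- (p * fst z))) * Cmod (f (RtoC p * z)%C)
                + exp (- (p * fst z)) * Cmod (f (RtoC (1 - p) * z)%C).
Proof.
  intros H.
  set (a := ((1 - Cexp (- (RtoC p * z))) * f (RtoC p * z))%C) in *.
  set (b := (Cexp (- (RtoC p * z)) * f (RtoC (1 - p) * z))%C) in *.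
  assert (Hg : g z = (f z + (- a) + (- b))%C) by (rewrite H; ring).
  rewrite Hg.
  eapply Rle_trans. apply Cmod_triangle. rewrite Cmod_opp.
  eapply Rle_trans. apply Rplus_le_compat_r. apply Cmod_triangle. rewrite Cmod_opp.
  unfold a, b. rewrite !Cmod_mult, Cmod_exp_neg.
  assert (Cmod (1 - Cexp (- (RtoC p * z))) <= 1 + exp (- (p * fst z))).
  { eapply Rle_trans. apply Cmod_triangle. rewrite Cmod_opp, Cmod_1, Cmod_exp_neg. lra. }
  pose proof (Cmod_ge_0 (f (RtoC p * z)%C)). nra.
Qed.


Lemma Cmod_le_sum x : Cmod x <= Rabs (fst x) + Rabs (snd x).
Proof.
  unfold Cmod. rewrite <- (sqrt_square (Rabs (fst x) + Rabs (snd x))).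
  2: { pose proof (Rabs_pos (fst x)); pose proof (Rabs_pos (snd x)); lra. }
  apply sqrt_le_1_alt.
  rewrite <- (pow2_abs (fst x)), <- (pow2_abs (snd x)).
  pose proof (Rabs_pos (fst x)); pose proof (Rabs_pos (snd x)); nra.
Qed.

Lemma cont_delta (f : C -> C) (t : C) : entire f ->
  exists d : posreal, forall z, Cmod (z - t) < d -> Cmod (f z) <= Cmod (f t) + 2.
Proof.
  intros Hf. pose proof (ex_derive_continuous f t (Hf t)) as Hc.
  assert (H1 : 0 < 1) by lra.
  specialize (Hc _ (locally_ball (f t) (mkposreal 1 H1))).
  destruct Hc as [d Hd]. exists d. intros z Hz.
  specialize (Hd z). 
  assert (Hb : @ball (AbsRing_UniformSpace C_AbsRing) t d z).
  { unfold ball. simpl. unfold AbsRing_ball. simpl. unfold abs, minus, plus, opp. simpl.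
    exact Hz. }
  specialize (Hd Hb).
  destruct Hd as [Hd1 Hd2]. simpl in Hd1, Hd2.
  unfold AbsRing_ball, abs, minus, plus, opp in Hd1, Hd2; simpl in Hd1, Hd2.
  assert (Hz' : f z = (f t + (f z - f t))%C) by ring.
  rewrite Hz'. eapply Rle_trans. apply Cmod_triangle.
  apply Rplus_le_compat_l. eapply Rle_trans. apply Cmod_le_sum.
  destruct (f z) as [a b], (f t) as [c d']. simpl in *.
  unfold ball in Hd1, Hd2; simpl in Hd1, Hd2; unfold AbsRing_ball, abs, minus, plus, opp in Hd1, Hd2; simpl in Hd1, Hd2.
  unfold Rminus. lra.
Qed.

Definition mxf (h : Compactness.Tn 2 R -> R) (l : list (Compactness.Tn 2 R)) : R :=
  fold_right (fun t acc => Rmax acc (h t)) 0 l.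

Lemma mxf_ge h l t : In t l -> h t <= mxf h l.
Proof.
  induction l as [|a l IH]; simpl; [tauto|]. intros [->|H].
  apply Rmax_r. eapply Rle_trans. apply IH, H. apply Rmax_l.
Qed.

Lemma mxf_pos h l : 0 <= mxf h l.
Proof. induction l; simpl. lra. eapply Rle_trans. apply IHl. apply Rmax_l. Qed.

Lemma entire_bounded (f : C -> C) (Rr : R) : entire f ->
  exists B, 0 <= B /\ forall z, Cmod z <= Rr -> Cmod (f z) <= B.
Proof.
  intros Hf.
  set (tc := fun t : Compactness.Tn 2 R => (fst t, fst (snd t)) : C).
  assert (Hd : forall t : Compactness.Tn 2 R, exists d : posreal,
     forall z, Cmod (z - tc t) < d -> Cmod (f z) <= Cmod (f (tc t)) + 2)
    by (intros; apply cont_delta; auto).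
  set (dl := fun t => proj1_sig (constructive_indefinite_description _ (Hd t))).
  assert (Hdl : forall t z, Cmod (z - tc t) < dl t -> Cmod (f z) <= Cmod (f (tc t)) + 2).
  { intros t. unfold dl. destruct (constructive_indefinite_description _ (Hd t)) as [d Hd']. exact Hd'. }
  clearbody dl.
  assert (Hpos : forall t, 0 < dl t / 2) by (intros; pose proof (cond_pos (dl t)); lra).
  set (delta := fun t => mkposreal _ (Hpos t)).
  apply NNPP. intros Hn.
  apply (compactness_list 2 (- Rr, (- Rr, tt)) (Rr, (Rr, tt)) delta).
  intros [l Hl]. apply Hn.
  exists (mxf (fun t => Cmod (f (tc t)) + 2) l). split. apply mxf_pos.
  intros z Hz.
  pose proof (Rmax_Cmod z) as Hm.
  assert (H1 : Rabs (fst z) <= Rr) by (eapply Rle_trans; [apply Rmax_l|]; eapply Rle_trans; [exact Hm| exact Hz]).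
  assert (H2 : Rabs (snd z) <= Rr) by (eapply Rle_trans; [apply Rmax_r|]; eapply Rle_trans; [exact Hm| exact Hz]).
  apply abs_le_inv in H1. apply abs_le_inv in H2.
  destruct (Hl (fst z, (snd z, tt))) as [t [Ht1 [Ht2 Ht3]]].
  { simpl. repeat split; lra. }
  eapply Rle_trans. apply (Hdl t).
  - destruct t as [t1 [t2 []]]. simpl in Ht3. destruct Ht3 as [C1 [C2 _]].
    eapply Rle_lt_trans. apply Cmod_le_sum. simpl. simpl in C1, C2. 
    destruct z as [z1 z2]. simpl in *. unfold Rminus in *. lra.
  - apply (mxf_ge (fun t => Cmod (f (tc t)) + 2)). exact Ht1.
Qed.


Definition Wadm (f : C -> C) : Prop :=
  exists (N : nat) (e K : R), 0 < e < 1 /\ 0 <= K /\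
    forall z, 1 <= Cmod z -> Cmod (f z) <= K * (Cmod z ^ N + exp ((1 - e) * Cmod z - fst z)).

Lemma nat_above (a : R) : exists N : nat, a <= INR N.
Proof. destruct (INR_archimed 1 a) as [n Hn]; [lra|]. exists n. lra. Qed.

Lemma ln1p_le r : 0 <= r -> ln (1 + r) <= r.
Proof.
  intros. rewrite <- (ln_exp r) at 2. apply ln_le. lra. apply exp_ineq1_le.
Qed.

Lemma ln1p_pos r : 0 < r -> 0 < ln (1 + r).
Proof. intros. rewrite <- ln_1. apply ln_increasing; lra. Qed.

Lemma rpow_poly (alpha beta : R) : exists (N : nat) (c : R), 0 <= c /\
  forall r, 1 <= r -> Rpower r alpha * Rpower (log_plus r) beta <= c * r ^ N.
Proof.
  set (k := Rabs (ln (ln 2))).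
  destruct (nat_above (alpha + Rabs beta)) as [N HN].
  exists N, (exp (Rabs beta * k)). split. left; apply exp_pos.
  intros r Hr.
  assert (HL0 : 0 < log_plus r) by (apply ln1p_pos; lra).
  assert (HL1 : log_plus r <= r) by (apply ln1p_le; lra).
  assert (HL2 : ln 2 <= log_plus r) by (unfold log_plus; apply ln_le; lra).
  assert (Hl2 : 0 < ln 2) by (rewrite <- ln_1; apply ln_increasing; lra).
  assert (Hlr : 0 <= ln r) by (rewrite <- ln_1; apply ln_le; lra).
  assert (HlL1 : ln (log_plus r) <= ln r) by (apply ln_le; auto).
  assert (HlL2 : ln (ln 2) <= ln (log_plus r)) by (apply ln_le; auto).
  assert (Hk1 : - k <= ln (ln 2)) by (pose proof (Rle_abs (- ln (ln 2))); rewrite Rabs_Ropp in *; unfold k; lra).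
  assert (Hb : beta * ln (log_plus r) <= Rabs beta * k + Rabs beta * ln r).
  { destruct (Rle_or_lt 0 beta).
    - rewrite Rabs_pos_eq by lra. assert (0 <= k) by apply Rabs_pos. nra.
    - rewrite Rabs_left by lra. assert (0 <= k) by apply Rabs_pos. nra. }
  unfold Rpower. rewrite <- exp_plus.
  rewrite <- (Rpower_pow N r) by lra. unfold Rpower. rewrite <- exp_plus.
  apply exp_mono.
  assert (INR N * ln r >= (alpha + Rabs beta) * ln r) by nra.
  lra.
Qed.

Lemma JS_to_W f : JS_admissible f -> Wadm f.
Proof.
  intros [eps [eps' [He [He' [[alpha [beta [K1 HI]]] [K2 HO]]]]]].
  destruct (rpow_poly alpha beta) as [N [c [Hc HN]]].
  exists N, eps', (Rabs K1 * c + Rabs K2). split; [lra|]. split.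
  { pose proof (Rabs_pos K1); pose proof (Rabs_pos K2). nra. }
  intros z Hz.
  set (r := Cmod z) in *.
  assert (Hpw : 0 <= r ^ N) by (apply pow_le; lra).
  assert (Hex : 0 < exp ((1 - eps') * r - fst z)) by apply exp_pos.
  pose proof (Rabs_pos K1); pose proof (Rabs_pos K2).
  destruct (Rle_or_lt (abs_arg z) eps) as [Ha | Ha].
  - specialize (HI z Hz Ha).
    assert (HS : 0 <= Rpower r alpha * Rpower (log_plus r) beta).
    { unfold Rpower. apply Rmult_le_pos; left; apply exp_pos. }
    assert (Cmod (f z) <= Rabs K1 * (Rpower r alpha * Rpower (log_plus r) beta)).
    { eapply Rle_trans. apply HI. apply Rmult_le_compat_r; auto. apply Rle_abs. }
    assert (Rabs K1 * (Rpower r alpha * Rpower (log_plus r) beta) <= Rabs K1 * (c * r ^ N)).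
    { apply Rmult_le_compat_l; auto. }
    assert (0 <= Rabs K1 * c * exp ((1 - eps') * r - fst z)) by (apply Rmult_le_pos; [apply Rmult_le_pos|]; lra).
    assert (0 <= Rabs K2 * r ^ N) by (apply Rmult_le_pos; lra).
    assert (0 <= Rabs K2 * exp ((1 - eps') * r - fst z)) by (apply Rmult_le_pos; lra).
    replace ((Rabs K1 * c + Rabs K2) * (r ^ N + exp ((1 - eps') * r - fst z))) with
      (Rabs K1 * (c * r ^ N) + Rabs K1 * c * exp ((1 - eps') * r - fst z) + Rabs K2 * r ^ N + Rabs K2 * exp ((1 - eps') * r - fst z)) by ring.
    lra.
  - assert (Hb : eps <= abs_arg z <= PI) by (split; [lra | apply acos_bound]).
    specialize (HO z Hz Hb).
    rewrite Cmod_mult, Cmod_Cexp in HO.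
    assert (Hf : Cmod (f z) <= Rabs K2 * exp ((1 - eps') * r - fst z)).
    { replace (exp ((1 - eps') * r - fst z)) with (exp ((1 - eps') * r) * / exp (fst z))
        by (rewrite <- exp_Ropp, <- exp_plus; reflexivity).
      assert (Hx0 : 0 < exp (fst z)) by apply exp_pos.
      apply Rmult_le_reg_l with (exp (fst z)); auto.
      eapply Rle_trans. apply HO.
      replace (exp (fst z) * (Rabs K2 * (exp ((1 - eps') * r) * / exp (fst z))))
        with (Rabs K2 * exp ((1 - eps') * r)) by (field; lra).
      apply Rmult_le_compat_r. left; apply exp_pos. apply Rle_abs. }
    assert (0 <= Rabs K1 * c * r ^ N) by (apply Rmult_le_pos; auto; apply Rmult_le_pos; auto).
    assert (0 <= Rabs K1 * c * exp ((1 - eps') * r - fst z)) by (apply Rmult_le_pos; [apply Rmult_le_pos|]; lra).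
    assert (0 <= Rabs K2 * r ^ N) by (apply Rmult_le_pos; lra).
    replace ((Rabs K1 * c + Rabs K2) * (r ^ N + exp ((1 - eps') * r - fst z))) with
      (Rabs K1 * c * r ^ N + Rabs K1 * c * exp ((1 - eps') * r - fst z) + Rabs K2 * r ^ N + Rabs K2 * exp ((1 - eps') * r - fst z)) by ring.
    lra.
Qed.

Lemma acos_le_inv c d : -1 <= c <= 1 -> -1 <= d <= 1 -> acos c <= acos d -> d <= c.
Proof.
  intros Hc Hd H. destruct (Req_dec (acos c) (acos d)) as [E|E].
  - rewrite <- (cos_acos c Hc), <- (cos_acos d Hd), E. lra.
  - pose proof (acos_bound c); pose proof (acos_bound d).
    pose proof (cos_decreasing_1 (acos c) (acos d) ltac:(lra) ltac:(lra) ltac:(lra) ltac:(lra) ltac:(lra)).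
    rewrite (cos_acos c Hc), (cos_acos d Hd) in H2. lra.
Qed.

Lemma ratio_bound z : 1 <= Cmod z -> -1 <= fst z / Cmod z <= 1.
Proof.
  intros Hz. pose proof (re_le_Cmod z) as H. apply abs_le_inv in H. unfold Re in H.
  split.
  - apply Rmult_le_reg_r with (Cmod z). lra. replace (fst z / Cmod z * Cmod z) with (fst z) by (field; lra). lra.
  - apply Rmult_le_reg_r with (Cmod z). lra. replace (fst z / Cmod z * Cmod z) with (fst z) by (field; lra). lra.
Qed.

Lemma W_to_JS f : Wadm f -> JS_admissible f.
Proof.
  intros [N [e [K [He [HK HW]]]]].
  assert (Hce : -1 <= 1 - e <= 1) by lra.
  destruct (pow_le_exp (e / 2) N ltac:(lra)) as [C [HC HCb]].
  exists (acos (1 - e)), (e / 2). split.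
  { apply acos_bound_lt. lra. }
  split. lra. split.
  - exists (INR N), 0, (2 * K). intros z Hz Ha.
    pose proof (ratio_bound z Hz) as Hrb.
    pose proof (acos_le_inv _ _ Hrb Hce Ha) as Hc.
    set (r := Cmod z) in *.
    assert (Hx : (1 - e) * r <= fst z).
    { replace (fst z) with (fst z / r * r) by (field; lra). apply Rmult_le_compat_r; lra. }
    rewrite Rpower_pow by lra. rewrite Rpower_O by (apply ln1p_pos; lra).
    specialize (HW z Hz).
    assert (exp ((1 - e) * r - fst z) <= 1) by (apply exp_le1; lra).
    assert (1 <= r ^ N) by (apply pow_R1_Rle; lra).
    assert (K * exp ((1 - e) * r - fst z) <= K * r ^ N) by (apply Rmult_le_compat_l; lra).
    fold r in HW. nra.
  - exists (K * (C + 1)). intros z Hz Ha.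
    pose proof (ratio_bound z Hz) as Hrb.
    pose proof (acos_le_inv _ _ Hce Hrb (proj1 Ha)) as Hc.
    set (r := Cmod z) in *.
    assert (Hx : fst z <= (1 - e) * r).
    { replace (fst z) with (fst z / r * r) by (field; lra). apply Rmult_le_compat_r; lra. }
    specialize (HW z Hz). fold r in HW.
    rewrite Cmod_mult, Cmod_Cexp.
    assert (Hx0 : 0 < exp (fst z)) by apply exp_pos.
    assert (H1 : exp (fst z) * Cmod (f z) <= K * (r ^ N * exp (fst z) + exp ((1 - e) * r))).
    { replace (K * (r ^ N * exp (fst z) + exp ((1 - e) * r))) with (exp (fst z) * (K * (r ^ N + exp ((1 - e) * r - fst z)))).
      apply Rmult_le_compat_l; lra.
      unfold Rminus. rewrite (exp_plus _ (- fst z)), exp_Ropp. field. lra. }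
    assert (H2 : r ^ N * exp (fst z) <= C * exp ((1 - e / 2) * r)).
    { eapply Rle_trans. apply Rmult_le_compat_r. lra. apply HCb. lra.
      rewrite Rmult_assoc, <- exp_plus. apply Rmult_le_compat_l; auto. apply exp_mono. lra. }
    assert (H3 : exp ((1 - e) * r) <= exp ((1 - e / 2) * r)) by (apply exp_mono; nra).
    assert (K * (r ^ N * exp (fst z) + exp ((1 - e) * r)) <= K * (C * exp ((1 - e / 2) * r) + exp ((1 - e / 2) * r))) by (apply Rmult_le_compat_l; lra).
    replace (K * (C + 1) * exp ((1 - e / 2) * r)) with (K * (C * exp ((1 - e / 2) * r) + exp ((1 - e / 2) * r))) by ring.
    lra.
Qed.


Lemma F2G (p : R) (f g : C -> C) (Hp : 0 < p) (Hpq : p <= 1 - p)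
  (Heq : forall z : C,
     f z = ((1 - Cexp (- (RtoC p * z))) * f (RtoC p * z)
            + Cexp (- (RtoC p * z)) * f (RtoC (1 - p) * z) + g z)%C) : entire g -> Wadm f -> Wadm g.
Proof.
  intros Hg [N [e [A [He [HA HW]]]]].
  destruct (pow_le_exp (1 - e) N ltac:(lra)) as [C [HC0 HC]].
  destruct (entire_bounded g (/ p) Hg) as [B [HB0 HB]].
  exists N, e, (A * (7 + 3 * C) + B). split; [auto|]. split.
  { assert (0 <= A * (7 + 3 * C)) by (apply Rmult_le_pos; lra). lra. }
  intros z Hz.
  set (r := Cmod z) in *. set (x := fst z).
  assert (HP1 : 1 <= r ^ N) by (apply pow_R1_Rle; lra).
  assert (HE0 : 0 < exp ((1 - e) * r - x)) by apply exp_pos.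
  assert (HAC : 0 <= A * (7 + 3 * C)) by (apply Rmult_le_pos; lra).
  destruct (Rlt_or_le (p * r) 1) as [Hsmall | Hbig].
  - assert (Cmod (g z) <= B).
    { apply HB. fold r. apply Rmult_le_reg_l with p; auto. rewrite Rinv_r; lra. }
    assert (0 <= A * (7 + 3 * C) * (r ^ N + exp ((1 - e) * r - x))) by (apply Rmult_le_pos; lra).
    assert (0 <= B * exp ((1 - e) * r - x)) by (apply Rmult_le_pos; lra).
    assert (B * 1 <= B * r ^ N) by (apply Rmult_le_compat_l; lra).
    replace ((A * (7 + 3 * C) + B) * (r ^ N + exp ((1 - e) * r - x))) with
      (A * (7 + 3 * C) * (r ^ N + exp ((1 - e) * r - x)) + B * r ^ N + B * exp ((1 - e) * r - x)) by ring.
    lra.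
  - assert (Hq1 : 1 <= (1 - p) * r) by nra.
    assert (Hcb : Cmod (g z) <= A * (7 + 3 * C) * (r ^ N + exp ((1 - e) * r - x))).
    { apply (core_back p e A r x (Cmod (f z)) (Cmod (f (RtoC p * z)%C)) (Cmod (f (RtoC (1 - p) * z)%C)) (Cmod (g z)) C N); auto.
      - unfold x, r. apply re_le_Cmod.
      - specialize (HC r ltac:(lra)).
        apply Rle_trans with (C * exp ((1 - e) * r) * exp (- ((1 - e) * r))).
        apply Rmult_le_compat_r. left; apply exp_pos. exact HC.
        right. rewrite Rmult_assoc, <- exp_plus, Rplus_opp_r, exp_0. ring.
      - apply Cmod_ge_0.
      - apply Cmod_ge_0.
      - pose proof (HW (RtoC p * z)%C) as H. rewrite Cmod_scal, fst_scal in H by lra. apply H. fold r; lra.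
      - pose proof (HW (RtoC (1 - p) * z)%C) as H. rewrite Cmod_scal, fst_scal in H by lra. apply H. fold r; lra.
      - apply rec_ineq_back, Heq. }
    assert (0 <= B * (r ^ N + exp ((1 - e) * r - x))) by (apply Rmult_le_pos; lra).
    replace ((A * (7 + 3 * C) + B) * (r ^ N + exp ((1 - e) * r - x))) with
      (A * (7 + 3 * C) * (r ^ N + exp ((1 - e) * r - x)) + B * (r ^ N + exp ((1 - e) * r - x))) by ring.
    lra.
Qed.

Lemma G2F (p : R) (f g : C -> C) (Hp : 0 < p) (Hpq : p <= 1 - p)
  (Heq : forall z : C,
     f z = ((1 - Cexp (- (RtoC p * z))) * f (RtoC p * z)
            + Cexp (- (RtoC p * z)) * f (RtoC (1 - p) * z) + g z)%C) : entire f -> Wadm g -> Wadm f.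
Proof.
  intros Hf [N [e [K [He [HK HW]]]]].
  set (q := 1 - p).
  assert (Hq : p <= q < 1) by (unfold q; lra).
  destruct (pow_small q (1/6) ltac:(lra) ltac:(lra)) as [M0 HM0].
  set (M := Nat.max (Nat.max M0 N) 1).
  assert (HMpow : 2 * p ^ M + q ^ M <= 1/2).
  { assert (q ^ M <= 1/6) by (apply HM0; unfold M; lia).
    assert (p ^ M <= q ^ M) by (apply pow_incr; lra). lra. }
  destruct (exp_small (p * (1 - e)) (1/8)) as [R1 HR1].
  { apply Rmult_lt_0_compat; lra. } lra.
  destruct (pow_le_exp ((1 - e) / 2) M ltac:(lra)) as [C1 [HC1 HC1b]].
  destruct (exp_small ((1 - e) / 2) (1 / (24 * (C1 + 1)))) as [R2 HR2].
  lra. { apply Rdiv_lt_0_compat; lra. }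
  set (Y0 := ln 6 / p).
  assert (Hl6 : 0 < ln 6) by (rewrite <- ln_1; apply ln_increasing; lra).
  assert (HY0 : 0 <= Y0) by (unfold Y0; apply Rlt_le, Rdiv_lt_0_compat; lra).
  assert (HY1 : exp (- (p * Y0)) <= 1/6).
  { unfold Y0. replace (- (p * (ln 6 / p))) with (- ln 6) by (field; lra).
    rewrite exp_Ropp, exp_ln by lra. lra. }
  set (R0 := Rmax (Rmax (Rmax R1 R2) (12 * exp Y0)) (Rmax (/ p) 1)).
  assert (HR01 : R1 <= R0) by (unfold R0; eapply Rle_trans; [|apply Rmax_l]; eapply Rle_trans; [|apply Rmax_l]; apply Rmax_l).
  assert (HR02 : R2 <= R0) by (unfold R0; eapply Rle_trans; [|apply Rmax_l]; eapply Rle_trans; [|apply Rmax_l]; apply Rmax_r).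
  assert (HR03 : 12 * exp Y0 <= R0) by (unfold R0; eapply Rle_trans; [|apply Rmax_l]; apply Rmax_r).
  assert (HR04 : / p <= R0) by (unfold R0; eapply Rle_trans; [|apply Rmax_r]; apply Rmax_l).
  assert (HR05 : 1 <= R0) by (unfold R0; eapply Rle_trans; [|apply Rmax_r]; apply Rmax_r).
  destruct (entire_bounded f R0 Hf) as [B [HB0 HB]].
  set (A := Rmax (4 * K) B).
  assert (HA1 : 4 * K <= A) by apply Rmax_l.
  assert (HA2 : B <= A) by apply Rmax_r.
  set (Bd := fun z => Cmod (f z) <= A * (Cmod z ^ M + exp ((1 - e) * Cmod z - fst z))).
  assert (Hbase : forall z, 1 <= Cmod z -> Cmod z <= R0 -> Bd z).
  { intros z Hz1 Hz2. unfold Bd. apply Rle_trans with B. apply HB; auto.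
    assert (1 <= Cmod z ^ M) by (apply pow_R1_Rle; lra).
    assert (0 < exp ((1 - e) * Cmod z - fst z)) by apply exp_pos.
    assert (A * 1 <= A * (Cmod z ^ M + exp ((1 - e) * Cmod z - fst z))) by (apply Rmult_le_compat_l; lra).
    lra. }
  assert (Hind : forall n : nat, forall z, 1 <= Cmod z -> q ^ n * Cmod z <= R0 -> Bd z).
  { induction n as [|n IH]; intros z Hz1 Hz2.
    - apply Hbase; auto. simpl in Hz2. lra.
    - destruct (Rle_or_lt (Cmod z) R0) as [Hs | Hl]. apply Hbase; auto.
      set (r := Cmod z) in *.
      assert (Hqn : 0 <= q ^ n) by (apply pow_le; lra).
      assert (Hpr : 1 <= p * r).
      { apply Rle_trans with (p * / p). rewrite Rinv_r; lra. apply Rmult_le_compat_l; lra. }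
      assert (Hqr : p * r <= q * r) by nra.
      assert (Hqn2 : q ^ n * (q * r) <= R0) by (simpl in Hz2; lra).
      assert (IHp : Bd (RtoC p * z)%C).
      { apply IH. rewrite Cmod_scal by lra. fold r. lra.
        rewrite Cmod_scal by lra. fold r. apply Rle_trans with (q ^ n * (q * r)); auto.
        apply Rmult_le_compat_l; auto. }
      assert (IHq : Bd (RtoC q * z)%C).
      { apply IH. rewrite Cmod_scal by lra. fold r. lra.
        rewrite Cmod_scal by lra. fold r. auto. }
      unfold Bd in IHp, IHq |- *. rewrite Cmod_scal, fst_scal in IHp, IHq by lra. fold r in IHp, IHq |- *.
      apply (core_step p e K A r (fst z) (Cmod (f z)) (Cmod (f (RtoC p * z)%C)) (Cmod (f (RtoC (1 - p) * z)%C)) (Cmod (g z)) Y0 M N); auto.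
      + unfold r. apply re_le_Cmod.
      + unfold M; lia.
      + unfold M; lia.
      + apply HR1. lra.
      + apply Rle_trans with (C1 * exp ((1 - e) / 2 * r) * exp (- ((1 - e) * r))).
        apply Rmult_le_compat_r. left; apply exp_pos. apply HC1b. lra.
        rewrite Rmult_assoc, <- exp_plus.
        replace ((1 - e) / 2 * r + - ((1 - e) * r)) with (- ((1 - e) / 2 * r)) by field.
        specialize (HR2 r ltac:(lra)).
        apply Rle_trans with (C1 * (1 / (24 * (C1 + 1)))).
        apply Rmult_le_compat_l; auto.
        apply Rmult_le_reg_r with (24 * (C1 + 1)). lra.
        replace (C1 * (1 / (24 * (C1 + 1))) * (24 * (C1 + 1))) with C1 by (field; lra). lra.
      + lra.
      + apply rec_ineq, Heq. }
  exists M, e, A. split; auto. split.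
  { apply Rle_trans with (4 * K); lra. }
  intros z Hz.
  destruct (pow_small q (R0 / Cmod z) ltac:(lra)) as [n Hn].
  { apply Rdiv_lt_0_compat; lra. }
  apply (Hind n z Hz).
  specialize (Hn n (le_n n)).
  apply Rmult_le_compat_r with (r := Cmod z) in Hn. 2: lra.
  replace (R0 / Cmod z * Cmod z) with R0 in Hn by (field; lra). exact Hn.
Qed.




Theorem mainTheorem10 (p : R) (f g : C -> C) :
  0 < p -> p <= 1 - p ->
  entire f -> entire g ->
  (forall z : C,
     f z = ((1 - Cexp (- (RtoC p * z))) * f (RtoC p * z)
            + Cexp (- (RtoC p * z)) * f (RtoC (1 - p) * z) + g z)%C) ->
  f 0%C = 0%C -> g 0%C = 0%C ->
  (JS_admissible f <-> JS_admissible g).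
Proof.
  intros Hp Hpq Hf Hg Heq _ _. split; intros H.
  - apply W_to_JS. apply (F2G p f g Hp Hpq Heq Hg). apply JS_to_W; exact H.
  - apply W_to_JS. apply (G2F p f g Hp Hpq Heq Hf). apply JS_to_W; exact H.
Qed.
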